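(* Let $P(\vec\alpha,\vec\beta,\vec\xi),P'(\vec\alpha,\vec\beta,\vec\xi)\in\mathcal{P}$ be two syntactically compositional predicates with the same parameters, and suppose $P'$ is stronger than $P$. Then the entailments $P'(\vec\alpha,\vec\beta,\vec\xi)\Rightarrow P(\vec\alpha,\vec\beta,\vec\xi)$ and $\exists\vec\beta.\ P'(\vec\alpha,\vec\beta,\vec\xi)\ast P(\vec\beta,\vec\gamma,\vec\xi)\Rightarrow P(\vec\alpha,\vec\gamma,\vec\xi)$ hold (for any pair $\vec\gamma$ of a location and a data variable).
   Context: Separation logic setting: location variables (interpreted in a set $\mathbb{L}$ of locations, with a constant ${\sf nil}$) and data variables; pointer fields $\mathcal{F}$ and data fields $\mathcal{D}$. A state is $(s,h)$ with $s$ a stack assigning values to variables and $h$ a finite partial heap mapping (location, field) pairs to locations or data values. Formulas: pure parts (location (dis)equalities and data constraints in a decidable theory), spatial parts $\mathtt{emp}$, $E\mapsto\rho$, predicate atoms, $\ast$ (separating conjunction over domain-disjoint heaps), with $\land,\lor,\exists$. Predicates are defined by finite sets of rules $Q(E,\vec F)::=\exists\vec Z.\Pi\land\Sigma$ with least-fixed-point semantics; an entailment $A\Rightarrow B$ means every $(s,h)$ satisfying $A$ satisfies $B$. Syntactic compositionality: $P$ has parameters $(\vec\alpha,\vec\beta,\vec\xi)$, $\vec\alpha=(E,C)$ (source), $\vec\beta=(F,H)$ (hole), $E,F$ location variables, $C,H$ data variables, $\vec\xi$ static parameters. $P$ is syntactically compositional if it has exactly one base rule $P(\vec\alpha,\vec\beta,\vec\xi)::=\alpha_1=\beta_1\land\alpha_2=\beta_2\land\mathtt{emp}$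 and at least one inductive rule, every inductive rule being of the form $P(\vec\alpha,\vec\beta,\vec\xi)::=\exists\vec Z.\ \Pi\land\Sigma_1\ast\Sigma_2\ast P(\vec\gamma,\vec\beta,\vec\xi)$ where $\Sigma_1$ is a nonempty separating conjunction of points-to atoms containing a unique points-to atom from $E$ and all location variables of $\vec Z$, whose Gaifman graph is a connected DAG rooted at $E$; $\Sigma_2$ is a possibly empty separating conjunction of predicate atoms whose first arguments are sink vertices of that graph; $\vec\gamma$ consists of variables of $\vec Z$; and the variables of $\vec\beta$ do not occur in $\Pi,\Sigma_1,\Sigma_2,\vec\gamma$. Stronger: $P'$ is stronger than $P$ if for each inductive rule $P'(\vec\alpha,\vec\beta,\vec\xi)::=\exists\vec Z.\ \Pi'\land\Sigma_1\ast\Sigma_2\ast P'(\vec\gamma,\vec\beta,\vec\xi)$ of $P'$ there is an inductive rule $P(\vec\alpha,\vec\beta,\vec\xi)::=\exists\vec Z.\ \Pi\land\Sigma_1\ast\Sigma_2\ast P(\vec\gamma,\vec\beta,\vec\xi)$ of $P$ (same $\vec Z,\Sigma_1,\Sigma_2,\vec\gamma$) such that $\Pi'\Rightarrow\Pi$ is valid. *)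

(* Defs.v *)
From Stdlib Require Import List Permutation Relations Arith.
Import ListNotations.
Set Implicit Arguments.

Inductive var := LV (n : nat) | DV (n : nat).
Inductive lterm := LVar (n : nat) | LNil.
Inductive arg := AL (t : lterm) | AD (n : nat).
Inductive field := PF (n : nat) | DF (n : nat).
Inductive fentry := FPtr (f : nat) (t : lterm) | FDat (f : nat) (d : nat).

Definition var_arg (v : var) : arg :=
  match v with LV n => AL (LVar n) | DV n => AD n end.

Definition entry_field (e : fentry) : field :=
  match e with FPtr f _ => PF f | FDat f _ => DF f end.

Section Syntax.
Variable D : Type.

(* pure atoms: location (dis)equalities, data equality, and data
   constraints of the data theory (an arbitrary relation on the values
   of the listed data variables) *)
Inductive pure_atom :=
| PLEq (a b : lterm)
| PLNeq (a b : lterm)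
| PDEq (c d : nat)
| PData (R : list D -> Prop) (xs : list nat).

Inductive satom :=
| SPto (x : lterm) (rho : list fentry)
| SPred (p : nat) (args : list arg).

(* rule  Q(params) ::= exists rZ. (/\ rpure) /\ ( * rspatial) *)
Record rule := { rZ : list var; rpure : list pure_atom; rspatial : list satom }.
Record pdef := { pparams : list var; prules : list rule }.

Inductive formula :=
| FPure (a : pure_atom)
| FEmp
| FPto (x : lterm) (rho : list fentry)
| FPred (p : nat) (args : list arg)
| FStar (f g : formula)
| FAnd (f g : formula)
| FOr (f g : formula)
| FEx (v : var) (f : formula).

Definition satom_formula (a : satom) : formula :=
  match a with SPto x rho => FPto x rho | SPred p args => FPred p args end.

Definition star_list (l : list satom) : formula :=
  fold_right (fun a f => FStar (satom_formula a) f) FEmp l.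

Definition rule_formula (r : rule) : formula :=
  fold_right FEx
    (fold_right (fun a f => FAnd (FPure a) f) (star_list r.(rspatial)) r.(rpure))
    r.(rZ).

Definition lterm_lvars (t : lterm) : list nat :=
  match t with LVar n => [n] | LNil => [] end.
Definition lterm_vars (t : lterm) : list var := map LV (lterm_lvars t).
Definition arg_vars (a : arg) : list var :=
  match a with AL t => lterm_vars t | AD n => [DV n] end.
Definition fentry_vars (e : fentry) : list var :=
  match e with FPtr _ t => lterm_vars t | FDat _ d => [DV d] end.
Definition pure_vars (a : pure_atom) : list var :=
  match a with
  | PLEq x y | PLNeq x y => lterm_vars x ++ lterm_vars y
  | PDEq c d => [DV c; DV d]
  | PData _ xs => map DV xs
  end.
Definition satom_vars (a : satom) : list var :=
  match a with
  | SPto x rho => lterm_vars x ++ flat_map fentry_vars rho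
  | SPred _ args => flat_map arg_vars args
  end.

Definition is_pto (a : satom) : Prop :=
  match a with SPto _ _ => True | SPred _ _ => False end.
Definition is_pred (a : satom) : Prop :=
  match a with SPto _ _ => False | SPred _ _ => True end.

Definition ptr_targets (rho : list fentry) : list nat :=
  flat_map (fun e => match e with FPtr _ t => lterm_lvars t | FDat _ _ => [] end) rho.

(* vertices of the Gaifman graph of Sigma1: location variables occurring in it *)
Definition gvertices (S1 : list satom) : list nat :=
  flat_map (fun a => match a with
                     | SPto x rho => lterm_lvars x ++ ptr_targets rho
                     | SPred _ _ => [] end) S1.
Definition gedge (S1 : list satom) (x y : nat) : Prop :=
  exists rho, In (SPto (LVar x) rho) S1 /\ In y (ptr_targets rho).

Definition is_sink (S1 : list satom) (x : nat) : Prop :=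
  In x (gvertices S1) /\ forall y, ~ gedge S1 x y.

Definition pto_from (E : nat) (a : satom) : bool :=
  match a with SPto (LVar n) _ => Nat.eqb n E | _ => false end.

(* parameter list (alpha, beta, xi) = (E, C, F, H, xi) *)
Definition comp_params (E C F H : nat) (xi : list var) : list var :=
  [LV E; DV C; LV F; DV H] ++ xi.

(* the recursive atom p(gamma, beta, xi), gamma = (g1, g2) *)
Definition rec_atom (p : nat) (g1 g2 F H : nat) (xi : list var) : satom :=
  SPred p (AL (LVar g1) :: AD g2 :: AL (LVar F) :: AD H :: map var_arg xi).

(* r has the shape  exists Z. Pi /\ Sigma1 * Sigma2 * p(gamma, beta, xi)
   (the spatial part read up to associativity/commutativity of * ) *)
Definition ind_shape (p : nat) (F H : nat) (xi : list var) (r : rule)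
  (S1 S2 : list satom) (g1 g2 : nat) : Prop :=
  Permutation r.(rspatial) (S1 ++ S2 ++ [rec_atom p g1 g2 F H xi])
  /\ Forall is_pto S1 /\ Forall is_pred S2.

Definition comp_ind_rule (p E C F H : nat) (xi : list var) (r : rule) : Prop :=
  exists S1 S2 g1 g2,
    ind_shape p F H xi r S1 S2 g1 g2
    /\ NoDup r.(rZ)
    /\ (forall v, In v r.(rZ) -> ~ In v (comp_params E C F H xi))
    /\ S1 <> []
    /\ length (filter (pto_from E) S1) = 1
    /\ (forall n, In (LV n) r.(rZ) -> In n (gvertices S1))
    /\ (forall v, In v (gvertices S1) -> clos_refl_trans nat (gedge S1) E v)
    /\ (forall v, ~ clos_trans nat (gedge S1) v v)
    /\ (forall q args, In (SPred q args) S2 ->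
          exists n rest, args = AL (LVar n) :: rest /\ is_sink S1 n)
    /\ In (LV g1) r.(rZ) /\ In (DV g2) r.(rZ)
    /\ (forall v, v = LV F \/ v = DV H ->
          ~ In v (flat_map pure_vars r.(rpure))
          /\ ~ In v (flat_map satom_vars S1)
          /\ ~ In v (flat_map satom_vars S2)
          /\ v <> LV g1 /\ v <> DV g2).

Definition is_base_rule (E C F H : nat) (r : rule) : Prop :=
  r.(rZ) = []
  /\ Permutation r.(rpure) [PLEq (LVar E) (LVar F); PDEq C H]
  /\ r.(rspatial) = [].

Definition syn_compositional (defs : nat -> pdef) (p E C F H : nat) (xi : list var) : Prop :=
  (defs p).(pparams) = comp_params E C F H xi
  /\ NoDup (comp_params E C F H xi)
  /\ exists rb rest,
       Permutation (defs p).(prules) (rb :: rest)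
       /\ is_base_rule E C F H rb
       /\ rest <> []
       /\ Forall (comp_ind_rule p E C F H xi) rest.

End Syntax.

Arguments PLEq {D} : rename. Arguments PLNeq {D} : rename. Arguments PDEq {D} : rename. Arguments PData {D} : rename.
Arguments SPto {D} : rename. Arguments SPred {D} : rename.
Arguments FPure {D} : rename. Arguments FEmp {D} : rename. Arguments FPto {D} : rename. Arguments FPred {D} : rename.
Arguments FStar {D} : rename. Arguments FAnd {D} : rename. Arguments FOr {D} : rename. Arguments FEx {D} : rename.

Section Semantics.
Variables (L : Type) (nil : L) (D : Type).

Inductive val := VL (l : L) | VD (d : D).
Record stack := { sL : nat -> L; sD : nat -> D }.
Definition heap := L -> field -> option val.

Definition hfinite (h : heap) : Prop :=
  exists dom : list (L * field), forall l f, h l f <> None -> In (l, f) dom.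
Definition hdisjoint (h1 h2 : heap) : Prop :=
  forall l f, h1 l f = None \/ h2 l f = None.
Definition hunion (h1 h2 : heap) : heap :=
  fun l f => match h1 l f with Some v => Some v | None => h2 l f end.

Definition eval_l (s : stack) (t : lterm) : L :=
  match t with LVar n => s.(sL) n | LNil => nil end.
Definition eval_arg (s : stack) (a : arg) : val :=
  match a with AL t => VL (eval_l s t) | AD n => VD (s.(sD) n) end.
Definition eval_var (s : stack) (v : var) : val :=
  match v with LV n => VL (s.(sL) n) | DV n => VD (s.(sD) n) end.
Definition eval_entry (s : stack) (e : fentry) : val :=
  match e with FPtr _ t => VL (eval_l s t) | FDat _ d => VD (s.(sD) d) end.

Definition updL (s : stack) (n : nat) (l : L) : stack :=
  {| sL := fun m => if Nat.eqb m n then l else s.(sL) m; sD := s.(sD) |}.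
Definition updD (s : stack) (n : nat) (d : D) : stack :=
  {| sL := s.(sL); sD := fun m => if Nat.eqb m n then d else s.(sD) m |}.

Definition pure_sat (s : stack) (a : pure_atom D) : Prop :=
  match a with
  | @PLEq _ x y => eval_l s x = eval_l s y
  | @PLNeq _ x y => eval_l s x <> eval_l s y
  | @PDEq _ c d => s.(sD) c = s.(sD) d
  | @PData _ R xs => R (map s.(sD) xs)
  end.

Fixpoint sat (I : nat -> list val -> heap -> Prop) (s : stack) (h : heap)
         (f : formula D) : Prop :=
  match f with
  | @FPure _ a => pure_sat s a
  | @FEmp _ => forall l fl, h l fl = None
  | @FPto _ x rho =>
      eval_l s x <> nil
      /\ (forall l fl, h l fl <> None -> l = eval_l s x /\ In fl (map entry_field rho))
      /\ Forall (fun e => h (eval_l s x) (entry_field e) = Some (eval_entry s e)) rho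
  | @FPred _ p args => I p (map (eval_arg s) args) h
  | @FStar _ f1 f2 =>
      exists h1 h2, hdisjoint h1 h2 /\ (forall l fl, h l fl = hunion h1 h2 l fl)
                    /\ sat I s h1 f1 /\ sat I s h2 f2
  | @FAnd _ f1 f2 => sat I s h f1 /\ sat I s h f2
  | @FOr _ f1 f2 => sat I s h f1 \/ sat I s h f2
  | @FEx _ (LV n) f1 => exists l, sat I (updL s n l) h f1
  | @FEx _ (DV n) f1 => exists d, sat I (updD s n d) h f1
  end.

Variable defs : nat -> pdef D.

Definition closed (I : nat -> list val -> heap -> Prop) : Prop :=
  forall p r s h, In r (defs p).(prules) -> sat I s h (rule_formula r) ->
    I p (map (eval_var s) (defs p).(pparams)) h.

Definition psem (p : nat) (vs : list val) (h : heap) : Prop :=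
  forall I, closed I -> I p vs h.

Definition models (s : stack) (h : heap) (f : formula D) : Prop := sat psem s h f.

Definition entails (A B : formula D) : Prop :=
  forall s h, hfinite h -> models s h A -> models s h B.

Definition pure_valid (Pi' Pi : list (pure_atom D)) : Prop :=
  forall s, Forall (pure_sat s) Pi' -> Forall (pure_sat s) Pi.

End Semantics.

Definition stronger {L : Type} (nil : L) {D : Type} (defs : nat -> pdef D) (P' P F H : nat) (xi : list var) : Prop :=
  forall r' S1 S2 g1 g2,
    In r' (defs P').(prules) -> ind_shape P' F H xi r' S1 S2 g1 g2 ->
    exists r, In r (defs P).(prules)
              /\ r.(rZ) = r'.(rZ)
              /\ ind_shape P F H xi r S1 S2 g1 g2
              /\ pure_valid nil r'.(rpure) r.(rpure).

(* Main.v *)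
Require Import Defs.
From Stdlib Require Import List Permutation Relations Arith FunctionalExtensionality.
Import ListNotations.


Definition sep {L D : Type} (A B : heap L D -> Prop) (h : heap L D) : Prop :=
  exists h1 h2, hdisjoint h1 h2 /\ (forall l f, h l f = hunion h1 h2 l f) /\ A h1 /\ B h2.

Lemma sep_mono {L D} (A A' B B' : heap L D -> Prop) h :
  (forall k, A k -> A' k) -> (forall k, B k -> B' k) -> sep A B h -> sep A' B' h.
Proof. intros HA HB (h1 & h2 & ? & ? & ? & ?). exists h1, h2; auto. Qed.

Lemma sep_comm {L D} (A B : heap L D -> Prop) h : sep A B h -> sep B A h.
Proof.
  intros (h1 & h2 & Hd & He & ? & ?). exists h2, h1. repeat split; auto.
  - intros l f; destruct (Hd l f); auto.
  - intros l f; rewrite He; unfold hunion; destruct (Hd l f) as [E|E]; rewrite E;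
    destruct (h1 l f), (h2 l f); congruence.
Qed.

Lemma sep_assoc {L D} (A B C : heap L D -> Prop) h : sep A (sep B C) h -> sep (sep A B) C h.
Proof.
  intros (h1 & k & Hd & He & HA & (h2 & h3 & Hd2 & He2 & HB & HC)).
  exists (hunion h1 h2), h3. repeat split.
  - intros l f. specialize (Hd l f). specialize (Hd2 l f). rewrite (He2 l f) in Hd.
    unfold hunion in *. destruct (h1 l f), (h2 l f), (h3 l f); intuition congruence.
  - intros l f. rewrite He. unfold hunion. rewrite He2. unfold hunion. destruct (h1 l f), (h2 l f); auto.
  - exists h1, h2. repeat split; auto.
    intros l f. specialize (Hd l f). specialize (Hd2 l f). rewrite (He2 l f) in Hd.
    unfold hunion in *. destruct (h1 l f), (h2 l f), (h3 l f); intuition congruence.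
  - auto.
Qed.

Lemma sep_swap {L D} (A B C : heap L D -> Prop) h : sep A (sep B C) h -> sep B (sep A C) h.
Proof.
  intro H. apply sep_assoc, sep_comm, sep_assoc, sep_comm in H.
  revert H. apply sep_mono; auto. intros k; apply sep_comm.
Qed.

Lemma sat_mono {L} (nil : L) {D} (I J : nat -> list (val L D) -> heap L D -> Prop) :
  (forall p vs h, I p vs h -> J p vs h) ->
  forall f s h, sat nil I s h f -> sat nil J s h f.
Proof.
  intros HIJ f. induction f; intros s h Hs; simpl in *; auto.
  - destruct Hs as (h1 & h2 & ? & ? & ? & ?). exists h1, h2; auto.
  - intuition.
  - intuition.
  - destruct v; destruct Hs as [x Hx]; exists x; auto.
Qed.

Lemma psem_closed {L} (nil : L) {D} (defs : nat -> pdef D) : closed nil defs (psem nil defs).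
Proof.
  intros p r s h Hin Hs I HI. apply (HI p r s h Hin).
  eapply sat_mono; [|exact Hs]. intros q vs k Hq. apply Hq, HI.
Qed.

Lemma sat_star {L} (nil : L) {D} I s h (f g : formula D) :
  sat nil I s h (FStar f g) = sep (fun k => sat nil I s k f) (fun k => sat nil I s k g) h.
Proof. reflexivity. Qed.

Lemma stack_ext {L D} (s t : stack L D) :
  (forall n, sL s n = sL t n) -> (forall n, sD s n = sD t n) -> s = t.
Proof.
  destruct s, t; simpl; intros H1 H2. f_equal; apply functional_extensionality; auto.
Qed.

Definition agree {L D} (s t : stack L D) (vs : list var) : Prop :=
  forall v, In v vs -> eval_var s v = eval_var t v.

Lemma agree_lterm {L} (nil : L) {D} (s t : stack L D) x :
  agree s t (lterm_vars x) -> eval_l nil s x = eval_l nil t x.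
Proof.
  destruct x; simpl; auto. intro H. specialize (H (LV n) (or_introl eq_refl)).
  simpl in H. congruence.
Qed.

Lemma agree_sub {L D} {s t : stack L D} {vs ws} :
  agree s t ws -> (forall v, In v vs -> In v ws) -> agree s t vs.
Proof. unfold agree; auto. Qed.

Lemma agree_D {L D} (s t : stack L D) n : agree s t [DV n] -> sD s n = sD t n.
Proof. intro H. specialize (H (DV n) (or_introl eq_refl)). simpl in H. congruence. Qed.

Lemma pure_agree {L} (nil : L) {D} (s t : stack L D) a :
  agree s t (pure_vars a) -> pure_sat nil s a -> pure_sat nil t a.
Proof.
  destruct a; simpl; intros H Hs.
  - rewrite <- (agree_lterm nil s t a), <- (agree_lterm nil s t b); auto;
      apply (agree_sub H); intros; apply in_or_app; auto.
  - rewrite <- (agree_lterm nil s t a), <- (agree_lterm nil s t b); auto;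
      apply (agree_sub H); intros; apply in_or_app; auto.
  - rewrite <- (agree_D s t c), <- (agree_D s t d); auto; apply (agree_sub H);
      simpl; intuition.
  - replace (map (sD t) xs) with (map (sD s) xs); auto.
    apply map_ext_in. intros n Hn. apply agree_D. apply (agree_sub H).
    simpl. intros v [<-|[]]. apply in_map; auto.
Qed.

Lemma agree_arg {L} (nil : L) {D} (s t : stack L D) a :
  agree s t (arg_vars a) -> eval_arg nil s a = eval_arg nil t a.
Proof.
  destruct a; simpl; intro H.
  - rewrite (agree_lterm nil s t); auto.
  - rewrite (agree_D s t); auto.
Qed.

Lemma agree_entry {L} (nil : L) {D} (s t : stack L D) e :
  agree s t (fentry_vars e) -> eval_entry nil s e = eval_entry nil t e.
Proof.
  destruct e; simpl; intro H.
  - rewrite (agree_lterm nil s t); auto.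
  - rewrite (agree_D s t); auto.
Qed.

Lemma satom_agree {L} (nil : L) {D} I (s t : stack L D) (a : satom) k :
  agree s t (satom_vars a) -> sat nil I s k (satom_formula D a) -> sat nil I t k (satom_formula D a).
Proof.
  destruct a as [x rho|p args]; simpl; intros H Hs.
  - assert (Ex : eval_l nil s x = eval_l nil t x).
    { apply agree_lterm. apply (agree_sub H). intros; apply in_or_app; auto. }
    rewrite <- Ex. destruct Hs as (H1 & H2 & H3). split; [auto|split; [auto|]].
    rewrite Forall_forall in *. intros e He. rewrite H3; auto.
    f_equal. apply agree_entry. apply (agree_sub H). intros v Hv. apply in_or_app; right.
    apply in_flat_map. eauto.
  - replace (map (eval_arg nil t) args) with (map (eval_arg nil s) args); auto.
    apply map_ext_in. intros a Ha. apply agree_arg. apply (agree_sub H).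
    intros v Hv. apply in_flat_map; eauto.
Qed.

Lemma eval_var_updL {L D} (s : stack L D) n l v :
  eval_var (updL s n l) v = if (match v with LV m => Nat.eqb m n | _ => false end)
                            then VL D l else eval_var s v.
Proof. destruct v; simpl; auto. destruct (n0 =? n); auto. Qed.

Lemma eval_var_updD {L D} (s : stack L D) n d v :
  eval_var (updD s n d) v = if (match v with DV m => Nat.eqb m n | _ => false end)
                            then VD L d else eval_var s v.
Proof. destruct v; simpl; auto. destruct (n0 =? n); auto. Qed.

Lemma ex_fwd {L} (nil : L) {D} I (Z : list var) : forall (s : stack L D) h f,
  sat nil I s h (fold_right FEx f Z) ->
  exists s', (forall v, ~ In v Z -> eval_var s' v = eval_var s v) /\ sat nil I s' h f.
Proof.
  induction Z as [|v Z IH]; simpl; intros s h f Hs.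
  - exists s; auto.
  - destruct v as [n|n]; destruct Hs as [x Hx]; apply IH in Hx as (s' & H1 & H2);
      exists s'; split; auto; intros w Hw; rewrite H1 by tauto.
    + rewrite eval_var_updL. destruct w; auto. destruct (Nat.eqb_spec n0 n); subst; auto.
      exfalso; auto.
    + rewrite eval_var_updD. destruct w; auto. destruct (Nat.eqb_spec n0 n); subst; auto.
      exfalso; auto.
Qed.

Lemma ex_bwd {L} (nil : L) {D} I (Z : list var) : forall (s s' : stack L D) h f,
  (forall v, ~ In v Z -> eval_var s' v = eval_var s v) -> sat nil I s' h f ->
  sat nil I s h (fold_right FEx f Z).
Proof.
  induction Z as [|v Z IH]; simpl; intros s s' h f Hag Hs.
  - replace s with s'; auto. apply stack_ext; intro n.
    + specialize (Hag (LV n) (fun x => x)); simpl in Hag; congruence.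
    + specialize (Hag (DV n) (fun x => x)); simpl in Hag; congruence.
  - destruct v as [n|n].
    + exists (sL s' n). apply (IH _ s'); auto. intros w Hw.
      rewrite eval_var_updL. destruct w as [m|m]; simpl.
      * destruct (Nat.eqb_spec m n); subst; auto.
        apply (Hag (LV m)). intuition congruence.
      * apply (Hag (DV m)). intuition congruence.
    + exists (sD s' n). apply (IH _ s'); auto. intros w Hw.
      rewrite eval_var_updD. destruct w as [m|m]; simpl.
      * apply (Hag (LV m)). intuition congruence.
      * destruct (Nat.eqb_spec m n); subst; auto.
        apply (Hag (DV m)). intuition congruence.
Qed.

Lemma pure_fold {L} (nil : L) {D} I (s : stack L D) h g (Pi : list (pure_atom D)) :
  sat nil I s h (fold_right (fun a f => FAnd (FPure a) f) g Pi) <->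
  Forall (pure_sat nil s) Pi /\ sat nil I s h g.
Proof.
  induction Pi; simpl.
  - intuition.
  - rewrite IHPi. split; [intros (? & ? & ?)|intros (HF & ?); inversion HF]; auto.
Qed.

Lemma star_cons {L} (nil : L) {D} I (s : stack L D) h a l :
  sat nil I s h (star_list D (a :: l)) =
  sep (fun k => sat nil I s k (satom_formula D a)) (fun k => sat nil I s k (star_list D l)) h.
Proof. reflexivity. Qed.

Lemma star_perm {L} (nil : L) {D} I (s : stack L D) (l1 l2 : list satom) :
  Permutation l1 l2 -> forall h, sat nil I s h (star_list D l1) -> sat nil I s h (star_list D l2).
Proof.
  induction 1; intros h Hs; auto.
  - rewrite star_cons in *. revert Hs. apply sep_mono; auto.
  - rewrite !star_cons in *. revert Hs. apply sep_swap.
Qed.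

Lemma star_mono {L} (nil : L) {D} I J (s t : stack L D) (l : list satom) :
  (forall a, In a l -> forall k, sat nil I s k (satom_formula D a) -> sat nil J t k (satom_formula D a)) ->
  forall h, sat nil I s h (star_list D l) -> sat nil J t h (star_list D l).
Proof.
  induction l; intros Ha h Hs; auto.
  rewrite star_cons in *. revert Hs. apply sep_mono; simpl in Ha; auto.
Qed.

Lemma map_eval_arg_var {L} (nil : L) {D} (s : stack L D) l :
  map (eval_arg nil s) (map var_arg l) = map (eval_var s) l.
Proof. rewrite map_map. apply map_ext. intros []; reflexivity. Qed.

Lemma upd2 {L D} (s : stack L D) F H a b v :
  v <> LV F -> v <> DV H -> eval_var (updD (updL s F a) H b) v = eval_var s v.
Proof.
  intros H1 H2. destruct v as [m|m]; simpl.
  - destruct (Nat.eqb_spec m F); subst; congruence.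
  - destruct (Nat.eqb_spec m H); subst; congruence.
Qed.

Lemma map_upd2 {L D} (s : stack L D) F H a b xi :
  ~ In (LV F) xi -> ~ In (DV H) xi ->
  map (eval_var (updD (updL s F a) H b)) xi = map (eval_var s) xi.
Proof.
  intros H1 H2. apply map_ext_in. intros v Hv. apply upd2; intro; subst; auto.
Qed.

Lemma perm_rec (l S1 S2 : list satom) x :
  Permutation l (S1 ++ S2 ++ [x]) -> Permutation l (x :: (S1 ++ S2)).
Proof.
  intro Hp. rewrite app_assoc in Hp. eapply perm_trans; [exact Hp|].
  symmetry. apply Permutation_cons_append.
Qed.

Lemma frame_split {L D} (h hR hA h2 : heap L D) :
  hdisjoint hR hA -> (forall l f, h l f = hunion hR hA l f) -> hdisjoint h h2 ->
  hdisjoint hR h2 /\ hdisjoint (hunion hR h2) hA /\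
  forall l f, hunion h h2 l f = hunion (hunion hR h2) hA l f.
Proof.
  intros Hd He Hd2. repeat split; intros l f;
  specialize (Hd l f); specialize (Hd2 l f); specialize (He l f);
  unfold hunion in *; rewrite ?He in *;
  destruct (hR l f), (hA l f), (h2 l f); intuition congruence.
Qed.

Lemma nodup_facts (E C F H : nat) xi :
  NoDup (comp_params E C F H xi) ->
  E <> F /\ C <> H /\ ~ In (LV F) xi /\ ~ In (DV H) xi.
Proof.
  unfold comp_params; simpl. intro Hn.
  inversion Hn as [|? ? HE Hn1]; subst.
  inversion Hn1 as [|? ? HC Hn2]; subst.
  inversion Hn2 as [|? ? HF Hn3]; subst.
  inversion Hn3 as [|? ? HH Hn4]; subst.
  repeat split.
  - intro; subst; apply HE; simpl; auto.
  - intro; subst; apply HC; simpl; auto.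
  - intro; apply HF; simpl; auto.
  - auto.
Qed.

Lemma rules_cases {D} (defs : nat -> pdef D) P E C F H xi r :
  syn_compositional defs P E C F H xi -> In r (prules (defs P)) ->
  is_base_rule E C F H r \/ comp_ind_rule P E C F H xi r.
Proof.
  intros (_ & _ & rb & rest & Hp & Hb & _ & Hf) Hin.
  apply (Permutation_in _ Hp) in Hin. destruct Hin as [<-|Hin]; auto.
  right. rewrite Forall_forall in Hf; auto.
Qed.

Lemma base_exists {D} (defs : nat -> pdef D) P E C F H xi :
  syn_compositional defs P E C F H xi ->
  exists rb, In rb (prules (defs P)) /\ is_base_rule E C F H rb.
Proof.
  intros (_ & _ & rb & rest & Hp & Hb & _ & Hf). exists rb; split; auto.
  apply (Permutation_in _ (Permutation_sym Hp)); simpl; auto.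
Qed.

Lemma base_sat {L} (nil : L) {D} I (s : stack L D) h E C F H (r : rule D) :
  is_base_rule E C F H r ->
  sat nil I s h (rule_formula r) <->
  (sL s E = sL s F /\ sD s C = sD s H /\ forall l f, h l f = None).
Proof.
  intros (HZ & Hp & Hs). unfold rule_formula. rewrite HZ, Hs. simpl fold_right.
  rewrite pure_fold. rewrite !Forall_forall.
  split.
  - intros (Hpu & He). repeat split; auto.
    + specialize (Hpu (PLEq (LVar E) (LVar F))). apply Hpu.
      apply (Permutation_in _ (Permutation_sym Hp)); simpl; auto.
    + specialize (Hpu (PDEq C H)). apply Hpu.
      apply (Permutation_in _ (Permutation_sym Hp)); simpl; auto.
  - intros (H1 & H2 & H3). split; auto. intros x Hx.
    apply (Permutation_in _ Hp) in Hx. simpl in Hx.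
    destruct Hx as [<-|[<-|[]]]; simpl; auto.
Qed.

Lemma part1 {L} (nil : L) {D} (defs : nat -> pdef D) (P P' E C F H : nat) (xi : list var) :
  syn_compositional defs P E C F H xi ->
  syn_compositional defs P' E C F H xi ->
  stronger nil defs P' P F H xi ->
  forall vs h, psem nil defs P' vs h -> psem nil defs P vs h.
Proof.
  intros HP HP' Hstr vs h Hp.
  set (I := fun q vs h => psem nil defs q vs h /\ (q = P' -> psem nil defs P vs h)).
  enough (HI : closed nil defs I) by (apply (Hp I HI); reflexivity).
  intros q r s k Hin Hs.
  assert (Hs' : sat nil (psem nil defs) s k (rule_formula r)).
  { eapply sat_mono; [|exact Hs]. intros ? ? ? Hx; apply Hx. }
  split; [exact (psem_closed nil defs q r s k Hin Hs')|].
  intros ->.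
  destruct HP as (HparP & HnodP & HPr). destruct HP' as (HparP' & HnodP' & HPr').
  rewrite HparP'. rewrite <- HparP.
  destruct (rules_cases defs P' E C F H xi r (conj HparP' (conj HnodP' HPr')) Hin) as [Hb|Hi].
  - destruct (base_exists defs P E C F H xi (conj HparP (conj HnodP HPr))) as (rb & Hinb & Hbb).
    apply (psem_closed nil defs P rb s k Hinb).
    apply (base_sat nil _ s k E C F H rb Hbb). apply (base_sat nil _ s k E C F H r Hb) in Hs.
    exact Hs.
  - destruct Hi as (S1 & S2 & g1 & g2 & Hsh & _).
    destruct (Hstr r S1 S2 g1 g2 Hin Hsh) as (r0 & Hin0 & HZ & Hsh0 & Hpv).
    apply (psem_closed nil defs P r0 s k Hin0).
    unfold rule_formula in *. apply ex_fwd in Hs as (s' & Hag & Hs).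
    rewrite HZ. apply (ex_bwd nil _ _ s s'); auto.
    apply pure_fold in Hs as [Hpu Hsp]. apply pure_fold; split; [apply Hpv; auto|].
    apply (star_perm nil _ s' _ _ (Permutation_sym (perm_rec _ _ _ _ (proj1 Hsh0)))).
    apply (star_perm nil _ s' _ _ (perm_rec _ _ _ _ (proj1 Hsh))) in Hsp.
    rewrite star_cons in *. revert Hsp. apply sep_mono.
    + intros k' Hk. simpl in *. apply Hk. reflexivity.
    + intros k' Hk. eapply sat_mono; [|exact Hk]. intros ? ? ? Hx; apply Hx.
Qed.

Lemma compose {L} (nil : L) {D} (defs : nat -> pdef D) (P E C F H : nat) (xi : list var) :
  syn_compositional defs P E C F H xi ->
  forall vs h1, psem nil defs P vs h1 ->
  forall e c f d xs, vs = VL D e :: VD L c :: VL D f :: VD L d :: xs ->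
  forall a b h2, hdisjoint h1 h2 ->
  psem nil defs P (VL D f :: VD L d :: VL D a :: VD L b :: xs) h2 ->
  psem nil defs P (VL D e :: VD L c :: VL D a :: VD L b :: xs) (hunion h1 h2).
Proof.
  intros HP vs h1 Hp.
  set (Q := fun (vs : list (val L D)) (h1 : heap L D) =>
    forall e c f d xs, vs = VL D e :: VD L c :: VL D f :: VD L d :: xs ->
    forall a b h2, hdisjoint h1 h2 ->
    psem nil defs P (VL D f :: VD L d :: VL D a :: VD L b :: xs) h2 ->
    psem nil defs P (VL D e :: VD L c :: VL D a :: VD L b :: xs) (hunion h1 h2)).
  set (I := fun q vs h => psem nil defs q vs h /\ (q = P -> Q vs h)).
  enough (HI : closed nil defs I) by (apply (Hp I HI); reflexivity).
  intros q r s k Hin Hs.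
  assert (Hs' : sat nil (psem nil defs) s k (rule_formula r)).
  { eapply sat_mono; [|exact Hs]. intros ? ? ? Hx; apply Hx. }
  split; [exact (psem_closed nil defs q r s k Hin Hs')|].
  intros ->.
  pose proof HP as HP0.
  destruct HP as (HparP & HnodP & HPr).
  destruct (nodup_facts _ _ _ _ _ HnodP) as (HEF & HCH & HFx & HHx).
  rewrite HparP. intros e c f d xs Heq a b h2 Hd2 Hp2.
  simpl in Heq. injection Heq as E1 E2 E3 E4 E5; subst e c f d xs.
  destruct (rules_cases defs P E C F H xi r HP0 Hin) as [Hb|Hi].
  - apply (base_sat nil _ s k E C F H r Hb) in Hs as (H1 & H2 & H3).
    rewrite H1, H2.
    replace (hunion k h2) with h2; auto.
    apply functional_extensionality; intro l; apply functional_extensionality; intro fl.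
    unfold hunion. rewrite H3. reflexivity.
  - destruct Hi as (S1 & S2 & g1 & g2 & Hsh & _ & Hfresh & _ & _ & _ & _ & _ & _ & _ & _ & Hbeta).
    unfold rule_formula in Hs. apply ex_fwd in Hs as (s' & Hag & Hs).
    apply pure_fold in Hs as [Hpu Hsp].
    apply (star_perm nil _ s' _ _ (perm_rec _ _ _ _ (proj1 Hsh))) in Hsp.
    rewrite star_cons in Hsp. destruct Hsp as (hR & hA & HdRA & HeRA & HR & HA).
    destruct (frame_split k hR hA h2 HdRA HeRA Hd2) as (HdR2 & Hd' & He').
    assert (Hnz : forall v, In v (comp_params E C F H xi) -> eval_var s' v = eval_var s v).
    { intros v Hv. apply Hag. intro Hz. exact (Hfresh v Hz Hv). }
    assert (EF : sL s' F = sL s F).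
    { specialize (Hnz (LV F)). simpl in Hnz. injection Hnz; auto. }
    assert (EH : sD s' H = sD s H).
    { specialize (Hnz (DV H)). simpl in Hnz. injection Hnz; auto. }
    assert (Exi : map (eval_var s') xi = map (eval_var s) xi).
    { apply map_ext_in. intros v Hv. apply Hnz. unfold comp_params. simpl; tauto. }
    simpl in HR. rewrite map_eval_arg_var, Exi, EF, EH in HR.
    destruct HR as [_ HQ].
    specialize (HQ eq_refl _ _ _ _ _ eq_refl a b h2 HdR2 Hp2).
    set (t := updD (updL s F a) H b).
    set (t' := updD (updL s' F a) H b).
    assert (Ht : map (eval_var t) (comp_params E C F H xi) =
                 VL D (sL s E) :: VD L (sD s C) :: VL D a :: VD L b :: map (eval_var s) xi).
    { unfold t, comp_params. simpl.
      rewrite (proj2 (Nat.eqb_neq E F) HEF), (proj2 (Nat.eqb_neq C H) HCH), !Nat.eqb_refl.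
      rewrite map_upd2; auto. }
    rewrite <- Ht, <- HparP.
    replace (hunion k h2) with (hunion (hunion hR h2) hA).
    2:{ apply functional_extensionality; intro l; apply functional_extensionality; intro fl.
        rewrite He'; reflexivity. }
    apply (psem_closed nil defs P r t _ Hin).
    unfold rule_formula. apply (ex_bwd nil _ _ t t').
    { intros v Hv. unfold t, t'. destruct v as [m|m]; simpl.
      - destruct (m =? F); auto. apply (Hag (LV m) Hv).
      - destruct (m =? H); auto. apply (Hag (DV m) Hv). }
    assert (Hbe : forall v, v <> LV F -> v <> DV H -> eval_var t' v = eval_var s' v).
    { intros v H1 H2. apply upd2; auto. }
    apply pure_fold. split.
    { rewrite Forall_forall in *. intros x Hx. apply (pure_agree nil s'); auto.
      intros v Hv. symmetry. apply Hbe; intros ->; 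
        [apply (proj1 (Hbeta (LV F) (or_introl eq_refl)))
        |apply (proj1 (Hbeta (DV H) (or_intror eq_refl)))];
        apply in_flat_map; eauto. }
    apply (star_perm nil _ t' _ _ (Permutation_sym (perm_rec _ _ _ _ (proj1 Hsh)))).
    rewrite star_cons. exists (hunion hR h2), hA. repeat split; auto.
    + simpl. rewrite map_eval_arg_var.
      assert (Ext : map (eval_var t') xi = map (eval_var s) xi).
      { unfold t'. rewrite map_upd2; auto. }
      rewrite Ext, !Nat.eqb_refl.
      destruct (Nat.eqb_spec g1 F) as [->|_].
      { exfalso. apply (proj1 (proj2 (proj2 (proj2 (Hbeta (LV F) (or_introl eq_refl)))))). reflexivity. }
      destruct (Nat.eqb_spec g2 H) as [->|_].
      { exfalso. apply (proj2 (proj2 (proj2 (proj2 (Hbeta (DV H) (or_intror eq_refl)))))). reflexivity. }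
      exact HQ.
    + revert HA. apply star_mono. intros x Hx k' Hk.
      apply (satom_agree nil _ s'); [|eapply sat_mono; [|exact Hk]; intros ? ? ? Hy; apply Hy].
      intros v Hv. symmetry. apply in_app_or in Hx.
      destruct Hx as [Hx|Hx]; apply Hbe; intros ->.
      * apply (proj1 (proj2 (Hbeta (LV F) (or_introl eq_refl)))). apply in_flat_map; eauto.
      * apply (proj1 (proj2 (Hbeta (DV H) (or_intror eq_refl)))). apply in_flat_map; eauto.
      * apply (proj1 (proj2 (proj2 (Hbeta (LV F) (or_introl eq_refl))))). apply in_flat_map; eauto.
      * apply (proj1 (proj2 (proj2 (Hbeta (DV H) (or_intror eq_refl))))). apply in_flat_map; eauto.
Qed.

Theorem theorem3 (L : Type) (nil : L) (D : Type) (defs : nat -> pdef D)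
  (P P' E C F H : nat) (xi : list var) (G1 G2 : nat) :
  syn_compositional defs P E C F H xi ->
  syn_compositional defs P' E C F H xi ->
  stronger nil defs P' P F H xi ->
  entails nil defs
    (FPred P' (map var_arg (comp_params E C F H xi)))
    (FPred P (map var_arg (comp_params E C F H xi)))
  /\
  (G1 <> F -> G2 <> H ->
   entails nil defs
     (FEx (LV F) (FEx (DV H)
        (FStar (FPred P' (map var_arg (comp_params E C F H xi)))
               (FPred P (map var_arg (comp_params F H G1 G2 xi))))))
     (FPred P (map var_arg (comp_params E C G1 G2 xi)))).
Proof.
  intros HP HP' Hstr. split.
  - intros s h _ Hm. unfold models in *. simpl in *.
    exact (part1 nil defs P P' E C F H xi HP HP' Hstr _ _ Hm).
  - intros HG1 HG2 s h _ Hm. unfold models in *.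
    destruct Hm as (l & d & h1 & h2 & Hd & He & H1 & H2).
    cbn [sat] in H1, H2 |- *. rewrite map_eval_arg_var in *.
    apply (part1 nil defs P P' E C F H xi HP HP' Hstr) in H1.
    pose proof HP as HP0. destruct HP0 as (_ & HnodP & _).
    destruct (nodup_facts _ _ _ _ _ HnodP) as (HEF & HCH & HFx & HHx).
    unfold comp_params in *. simpl in H1, H2 |- *.
    rewrite map_upd2 in H1, H2 by auto.
    rewrite (proj2 (Nat.eqb_neq E F) HEF), (proj2 (Nat.eqb_neq C H) HCH),
      !Nat.eqb_refl in H1.
    rewrite (proj2 (Nat.eqb_neq G1 F) HG1), (proj2 (Nat.eqb_neq G2 H) HG2),
      !Nat.eqb_refl in H2.
    replace h with (hunion h1 h2).
    2:{ apply functional_extensionality; intro x; apply functional_extensionality; intro y.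
        rewrite He; reflexivity. }
    exact (compose nil defs P E C F H xi HP _ _ H1 _ _ _ _ _ eq_refl _ _ _ Hd H2).
Qed.
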